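(* Fix an integer $C\ge 2$. There exists $\rho_0>0$ (depending only on $C$) such that for every $\rho\ge\rho_0$ and every $h_S\in[0,1]$, with $h_L^\pm$ and $\hat h_F$ as in the context (so $0<h_L^-<h_L^+<1$): - if $h_L=\frac1C$, then $\dfrac{\partial \mathcal{J}_h^{\mathcal{G}}}{\partial h_F}=0$ for all $h_F\in(-1,1)$; - if $h_L\neq \frac1C$, then $\dfrac{\partial \mathcal{J}_h^{\mathcal{G}}}{\partial h_F}$ has the same sign as $\hat h_F-h_F$; in particular it is $<0$ if $h_L\in(0,h_L^-)$, or if $h_L\in(h_L^-,h_L^+)$ and $h_F\in(\hat h_F,1)$; it is $>0$ if $h_L\in(h_L^+,1]$, or if $h_L\in(h_L^-,h_L^+)$ and $h_F\in(-1,\hat h_F)$; and it is $=0$ if $h_L\in(h_L^-,h_L^+)$ and $h_F=\hat h_F$.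
   Context: Setting: $C\ge 2$ is the number of classes, $h_L\in[0,1]$ (label homophily), $h_S\in[0,1]$ (structural homophily), $h_F\in(-1,1)$ (feature homophily), and $\rho>0$ a real parameter (the spectral radius of the adjacency matrix). Define $$p_0=\frac{h_LC-1}{C-1},\qquad p_1=\frac{1-h_L}{C-1},\qquad \omega=\frac{h_F}{\rho},\qquad Q=C\,p_1^2+\frac{C(1-h_S)^2}{C-1}+p_0^2\ (>0),$$ $$\mathcal{J}_h^{\neg\mathcal{G}}=\frac{1-\omega^2 Q}{(1-\omega p_0)^2},\qquad \mathcal{J}_h^{\mathcal{G}}=\frac{p_0^2}{Q}\,\mathcal{J}_h^{\neg\mathcal{G}}.$$ Define $\hat h_F=\rho p_0/Q$ and $$h_L^+=\frac{4C+C(C-1)\rho-\sqrt{[4C+C(C-1)\rho]^2-4C(C+1)\,[\,C+1+(C-1)\rho+C(C-1)(1-h_S)^2\,]}}{2C(C+1)},$$ $$h_L^-=\frac{4C-C(C-1)\rho+\sqrt{[4C-C(C-1)\rho]^2-4C(C+1)\,[\,C+1-(C-1)\rho+C(C-1)(1-h_S)^2\,]}}{2C(C+1)}.$$ Partial derivatives are taken with $C$, $\rho$, $h_L$, $h_S$ held fixed. *)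

(* Defs.v *)
From Stdlib Require Import Reals.
From Coquelicot Require Import Coquelicot.
Open Scope R_scope.

Section GraphDefs.
(* C : number of classes (as a real, = INR of a natural >= 2) *)

Definition p0 (C hL : R) : R := (hL * C - 1) / (C - 1).
Definition p1 (C hL : R) : R := (1 - hL) / (C - 1).
Definition omega (rho hF : R) : R := hF / rho.
Definition Qf (C hL hS : R) : R :=
  C * (p1 C hL) ^ 2 + C * (1 - hS) ^ 2 / (C - 1) + (p0 C hL) ^ 2.

Definition J_notG (C rho hL hS hF : R) : R :=
  (1 - (omega rho hF) ^ 2 * Qf C hL hS) / (1 - omega rho hF * p0 C hL) ^ 2.

Definition J_G (C rho hL hS hF : R) : R :=
  (p0 C hL) ^ 2 / Qf C hL hS * J_notG C rho hL hS hF.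

Definition hF_hat (C rho hL hS : R) : R := rho * p0 C hL / Qf C hL hS.

Definition hL_plus (C rho hS : R) : R :=
  (4 * C + C * (C - 1) * rho
   - sqrt ((4 * C + C * (C - 1) * rho) ^ 2
           - 4 * C * (C + 1) * (C + 1 + (C - 1) * rho + C * (C - 1) * (1 - hS) ^ 2)))
  / (2 * C * (C + 1)).

Definition hL_minus (C rho hS : R) : R :=
  (4 * C - C * (C - 1) * rho
   + sqrt ((4 * C - C * (C - 1) * rho) ^ 2
           - 4 * C * (C + 1) * (C + 1 - (C - 1) * rho + C * (C - 1) * (1 - hS) ^ 2)))
  / (2 * C * (C + 1)).

End GraphDefs.

(* Main.v *)
Require Import Defs.
From Stdlib Require Import Reals Lra Psatz.
From Coquelicot Require Import Coquelicot.
Open Scope R_scope.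

Lemma deriv_J c rho hL hS x: 0<rho -> Qf c hL hS <> 0 -> 1 - x/rho * p0 c hL <> 0 ->
  is_derive (fun y => J_G c rho hL hS y) x
   (2 * (p0 c hL)^2/(rho^2 * (1-x/rho*p0 c hL)^3) * (hF_hat c rho hL hS - x)).
Proof.
intros Hr HQ Hd. unfold J_G, J_notG, omega, hF_hat.
auto_derive.
- intro H; apply Hd; nra.
- field. split; [exact HQ|]. split; [lra|]. intro H; apply Hd. apply (Rmult_eq_reg_l rho); [|lra]. field_simplify; lra.
Qed.

Lemma Q_id c x hS: c>1 -> Qf c x hS * (c-1)^2 = (c*c+c)*x^2 - 4*c*x + (c+1) + c*(c-1)*(1-hS)^2.
Proof. intros. unfold Qf, p0, p1. field. lra. Qed.

Lemma p0_id c x : c>1 -> p0 c x * (c-1) = x*c - 1.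
Proof. intros. unfold p0. field. lra. Qed.

Lemma Q_pos c x hS: c>1 -> 0<=x<=1 -> 0 < Qf c x hS.
Proof.
intros Hc Hx. pose proof (Q_id c x hS Hc) as E.
assert (0 < (c*c+c)*x^2 - 4*c*x + (c+1) + c*(c-1)*(1-hS)^2).
{ destruct (Req_dec x 1).
  - subst. assert (0 <= c*(c-1)*(1-hS)^2). { apply Rmult_le_pos; [nra| apply pow2_ge_0]. } assert (0 < (c-1)^2) by (apply pow2_gt_0; lra). nra.
  - assert (0 <= c*(c-1)*(1-hS)^2). { apply Rmult_le_pos; [nra| apply pow2_ge_0]. }
    assert (0 < (1-x)^2) by (apply pow2_gt_0; intro; apply H; lra). assert (0 <= (x*c-1)^2) by apply pow2_ge_0. assert (0 < c*(1-x)^2) by (apply Rmult_lt_0_compat; lra). nra. }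
assert (0 < (c-1)^2) by nra. nra.
Qed.

Lemma quad a B c0 x0: 0<a -> a*x0^2 - B*x0 + c0 < 0 ->
  (B - sqrt (B^2 - 4*a*c0))/(2*a) < x0 < (B + sqrt (B^2 - 4*a*c0))/(2*a) /\
  forall x, a*x^2 - B*x + c0 = a*(x - (B - sqrt (B^2 - 4*a*c0))/(2*a))*(x - (B + sqrt (B^2 - 4*a*c0))/(2*a)).
Proof.
intros Ha Hq.
assert (Hd: (2*a*x0 - B)^2 < B^2 - 4*a*c0) by nra.
set (s := sqrt (B^2 - 4*a*c0)).
assert (Hs2 : s*s = B^2 - 4*a*c0) by (apply sqrt_sqrt; assert (0 <= (2*a*x0-B)^2) by apply pow2_ge_0; lra).
assert (Hs0 : 0 <= s) by apply sqrt_pos.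
clearbody s.
assert (Hc0 : c0 = (B^2 - s*s)/(4*a)) by (rewrite Hs2; field; lra).
split.
- assert (Hl: B - 2*a*x0 < s) by nra.
  assert (Hr: 2*a*x0 - B < s) by nra.
  split.
  + apply (Rmult_lt_reg_r (2*a)); [lra|]. unfold Rdiv. rewrite Rmult_assoc, Rinv_l; lra.
  + apply (Rmult_lt_reg_r (2*a)); [lra|]. unfold Rdiv. rewrite Rmult_assoc, Rinv_l; lra.
- intro x. rewrite Hc0. field. lra.
Qed.

Lemma mneg X Y : 0 < X -> Y < 0 -> X*Y < 0. Proof. intros; nra. Qed.
Lemma negl X Y : X*Y < 0 -> 0 < Y -> X < 0. Proof. intros; nra. Qed.
Lemma divl h Q : 0 < Q -> h*Q < -Q -> h < -1. Proof. intros; nra. Qed.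
Lemma divr h Q : 0 < Q -> Q < h*Q -> 1 < h. Proof. intros; nra. Qed.

Theorem theorem2p3 (C : nat) (HC : (2 <= C)%nat) :
  exists rho0 : R, 0 < rho0 /\
  forall rho hS : R, rho0 <= rho -> 0 <= hS <= 1 ->
    let Cr := INR C in
    let hLm := hL_minus Cr rho hS in
    let hLp := hL_plus Cr rho hS in
    (0 < hLm /\ hLm < hLp /\ hLp < 1) /\
    forall hL hF : R, 0 <= hL <= 1 -> -1 < hF < 1 ->
      let f := fun x : R => J_G Cr rho hL hS x in
      let D := Derive f hF in
      let hh := hF_hat Cr rho hL hS in
      ex_derive f hF /\
      (hL = 1 / Cr -> D = 0) /\
      (hL <> 1 / Cr ->
        (0 < D <-> hF < hh) /\ (D < 0 <-> hh < hF) /\ (D = 0 <-> hF = hh) /\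
        (0 < hL < hLm -> D < 0) /\
        (hLm < hL < hLp -> hh < hF -> D < 0) /\
        (hLp < hL <= 1 -> 0 < D) /\
        (hLm < hL < hLp -> hF < hh -> 0 < D) /\
        (hLm < hL < hLp -> hF = hh -> D = 0)).
Proof.
assert (Hc2 : 2 <= INR C) by (apply (le_INR 2); exact HC).
exists (2 * INR C + 4). split; [lra|].
intros rho hS Hrho HhS Cr hLm hLp.
assert (Hrc : 2*Cr+4 <= rho) by (unfold Cr; lra).
set (c := Cr) in *.
assert (Hc : c >= 2) by (unfold c, Cr; lra). clearbody c.
set (s := (1 - hS)^2).
assert (Hs : 0 <= s <= 1) by (unfold s; split; nra).
set (a := c*(c+1)).
assert (Ha : 0 < a) by (unfold a; nra).
set (Bm := 4*c - c*(c-1)*rho).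
set (cm := c+1 - (c-1)*rho + c*(c-1)*s).
assert (Hr1 : (c-1)*(2*c+4) <= (c-1)*rho) by (apply Rmult_le_compat_l; lra).
assert (Hs1 : c*(c-1)*s <= c*(c-1)*1) by (apply Rmult_le_compat_l; [nra|lra]).
clear Hrho.
assert (Hcm : cm < 0) by (unfold cm; nra).
assert (Hqm0 : a*0^2 - Bm*0 + cm < 0) by (replace (a*0^2 - Bm*0 + cm) with cm by ring; exact Hcm).
destruct (quad a Bm cm 0 Ha Hqm0) as [[Hm1 Hm2] Hmid].
assert (EhLm : hLm = (Bm + sqrt (Bm^2 - 4*a*cm))/(2*a)).
{ unfold hLm, hL_minus, Bm, cm, a, s.
  replace (4 * c * (c + 1) * (c + 1 - (c - 1) * rho + c * (c - 1) * (1 - hS) ^ 2))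
    with (4 * (c * (c + 1)) * (c + 1 - (c - 1) * rho + c * (c - 1) * (1 - hS) ^ 2)) by ring.
  field. lra. }
set (r1m := (Bm - sqrt (Bm^2 - 4*a*cm))/(2*a)) in *.
set (r2m := (Bm + sqrt (Bm^2 - 4*a*cm))/(2*a)) in *.
clearbody r1m r2m.
set (Bp := 4*c + c*(c-1)*rho).
set (cp := c+1 + (c-1)*rho + c*(c-1)*s).
assert (Hr2 : c*(c-1)*(2*c+4) <= c*(c-1)*rho) by (apply Rmult_le_compat_l; nra).
assert (Hqp1 : a*1^2 - Bp*1 + cp < 0).
{ replace (a*1^2 - Bp*1 + cp) with (c*c+c - 4*c - c*(c-1)*rho + c+1+(c-1)*rho + c*(c-1)*s) by (unfold a, Bp, cp; ring).
  nra. }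
destruct (quad a Bp cp 1 Ha Hqp1) as [[Hp1 Hp2] Hpid].
assert (EhLp : hLp = (Bp - sqrt (Bp^2 - 4*a*cp))/(2*a)).
{ unfold hLp, hL_plus, Bp, cp, a, s.
  replace (4 * c * (c + 1) * (c + 1 + (c - 1) * rho + c * (c - 1) * (1 - hS) ^ 2))
    with (4 * (c * (c + 1)) * (c + 1 + (c - 1) * rho + c * (c - 1) * (1 - hS) ^ 2)) by ring.
  field. lra. }
set (r1p := (Bp - sqrt (Bp^2 - 4*a*cp))/(2*a)) in *.
set (r2p := (Bp + sqrt (Bp^2 - 4*a*cp))/(2*a)) in *.
clearbody r1p r2p.
assert (Hc1 : c > 1) by lra.
assert (Hcm2 : 0 < (c-1)^2) by nra.
assert (IDm : forall x, (rho * p0 c x + Qf c x hS) * (c-1)^2 = a*x^2 - Bm*x + cm).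
{ intro x. rewrite Rmult_plus_distr_r, Q_id by lra.
  replace (rho * p0 c x * (c-1)^2) with (rho * (c-1) * (p0 c x * (c-1))) by ring.
  rewrite p0_id by lra. unfold a, Bm, cm, s. ring. }
assert (IDp : forall x, (Qf c x hS - rho * p0 c x) * (c-1)^2 = a*x^2 - Bp*x + cp).
{ intro x. unfold Rminus at 1. rewrite Rmult_plus_distr_r, Q_id by lra.
  replace (- (rho * p0 c x) * (c-1)^2) with (- (rho * (c-1) * (p0 c x * (c-1)))) by ring.
  rewrite p0_id by lra. unfold a, Bp, cp, s. ring. }
assert (Hic : 0 < 1/c < 1) by (split; [apply Rdiv_lt_0_compat|apply (Rmult_lt_reg_r c); [|unfold Rdiv; rewrite Rmult_assoc, Rinv_l]]; lra).
assert (Hp0c : p0 c (1/c) = 0) by (unfold p0; field; lra).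
assert (HQc : 0 < Qf c (1/c) hS) by (apply Q_pos; lra).
assert (Hqmc : 0 < a*(1/c)^2 - Bm*(1/c) + cm).
{ rewrite <- IDm, Hp0c. nra. }
assert (Hqpc : 0 < a*(1/c)^2 - Bp*(1/c) + cp).
{ rewrite <- IDp, Hp0c. nra. }
rewrite Hmid in Hqmc. rewrite Hpid in Hqpc.
assert (HmC : r2m < 1/c).
{ destruct (Rlt_or_le r2m (1/c)) as [H|H]; auto.
  exfalso. destruct H as [H|H].
  - assert (0 < (1/c - r1m)) by lra. assert (1/c - r2m < 0) by lra.
    assert (0 < a * (1/c - r1m)) by nra. nra.
  - rewrite H in Hqmc. nra. }
assert (HpC : 1/c < r1p).
{ destruct (Rlt_or_le (1/c) r1p) as [H|H]; auto.
  exfalso. destruct H as [H|H].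
  - assert (0 < (1/c - r1p)) by lra. assert (1/c - r2p < 0) by lra.
    assert (0 < a * (1/c - r1p)) by nra. nra.
  - rewrite <- H in Hqpc. nra. }
split.
{ rewrite EhLm, EhLp. lra. }
intros hL hF HhL HhF f D hh.
assert (Hrho1 : 1 <= rho) by lra.
assert (HQ : 0 < Qf c hL hS) by (apply Q_pos; lra).
assert (Hp0 : p0 c hL * (c-1) = hL*c - 1) by (apply p0_id; lra).
assert (Hp0b : -1 <= p0 c hL <= 1) by (split; nra).
set (w := hF/rho).
assert (Hw : w * rho = hF) by (unfold w; field; lra).
assert (Hw1 : -1 < w < 1) by (split; nra).
set (den := 1 - w * p0 c hL).
assert (Hden : 0 < den) by (unfold den; nra).
assert (Hder := deriv_J c rho hL hS hF ltac:(lra) ltac:(lra) ltac:(fold w; fold den; lra)).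
fold w den in Hder.
set (K := 2 * (p0 c hL)^2/(rho^2 * den^3)) in *.
assert (HD : D = K * (hh - hF)) by (apply is_derive_unique; exact Hder).
assert (HK0 : 0 <= K) by (unfold K; apply Rmult_le_pos; [nra| apply Rlt_le, Rinv_0_lt_compat; apply Rmult_lt_0_compat; [nra| apply pow_lt; lra]]).
split; [exists (K * (hh - hF)); exact Hder|].
split.
{ intro E. rewrite HD. assert (p0 c hL = 0) by (rewrite E; unfold p0; field; lra).
  unfold K. rewrite H. field. split; [lra| nra]. }
intro Hne.
assert (Hp0n : p0 c hL <> 0).
{ intro E. apply Hne. rewrite E in Hp0. apply (Rmult_eq_reg_r c); [|lra]. field_simplify; lra. }
assert (HK : 0 < K).
{ unfold K. apply Rmult_lt_0_compat; [assert (0 < p0 c hL ^2) by (apply pow2_gt_0; auto); lra|].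
  apply Rinv_0_lt_compat; apply Rmult_lt_0_compat; [nra| apply pow_lt; lra]. }
assert (Hhh : hh * Qf c hL hS = rho * p0 c hL) by (unfold hh, hF_hat; field; lra).
assert (S1 : 0 < D <-> hF < hh).
{ rewrite HD; split; intro H.
  - rewrite <- (Rmult_0_r K) in H. apply Rmult_lt_reg_l in H; lra.
  - apply Rmult_lt_0_compat; lra. }
assert (S2 : D < 0 <-> hh < hF).
{ rewrite HD; split; intro H.
  - rewrite <- (Rmult_0_r K) in H. apply Rmult_lt_reg_l in H; lra.
  - rewrite <- (Rmult_0_r K). apply Rmult_lt_compat_l; lra. }
assert (S3 : D = 0 <-> hF = hh).
{ rewrite HD; split; intro H.
  - destruct (Rmult_integral _ _ H); lra.
  - rewrite H; ring. }
rewrite EhLm, EhLp in *.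
split; [exact S1|]. split; [exact S2|]. split; [exact S3|].
split.
{ intro H. apply S2.
  assert (Hq : a*hL^2 - Bm*hL + cm < 0).
  { rewrite Hmid. apply mneg; [apply Rmult_lt_0_compat|]; lra. }
  rewrite <- IDm in Hq.
  assert (rho * p0 c hL + Qf c hL hS < 0) by (apply (negl _ _ Hq Hcm2)).
  assert (hh < -1) by (apply (divl hh (Qf c hL hS)); lra). lra. }
split; [intros _ ?; apply S2; lra|].
split.
{ intro H. apply S1.
  assert (Hq : a*hL^2 - Bp*hL + cp < 0).
  { rewrite Hpid. apply mneg; [apply Rmult_lt_0_compat|]; lra. }
  rewrite <- IDp in Hq.
  assert (Qf c hL hS - rho * p0 c hL < 0) by (apply (negl _ _ Hq Hcm2)).
  assert (1 < hh) by (apply (divr hh (Qf c hL hS)); lra). lra. }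
split; [intros _ ?; apply S1; lra|].
intros _ ?; apply S3; lra.
Qed.
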